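(* Let $q \geq 5$ be a prime power and let $\mathcal{X}$ be a plane curve of degree $q-1$ defined over $\mathbb{F}_q$ without $\mathbb{F}_q$-linear components with $\mathrm{N}_q(\mathcal{X}) = (q-1)^2$. Then the set $\mathcal{X}(\mathbb{F}_q) \subseteq \mathbb{P}^2(\mathbb{F}_q)$ is a $((q-1)^2, q-1)$-arc.
   Context: $\mathcal{X}(\mathbb{F}_q) = \mathcal{X} \cap \mathbb{P}^2(\mathbb{F}_q)$ and $\mathrm{N}_q(\mathcal{X}) = \#\mathcal{X}(\mathbb{F}_q)$. ''Without $\mathbb{F}_q$-linear components'' means no line defined over $\mathbb{F}_q$ is a component. A $(k,n)$-arc in $\mathbb{P}^2(\mathbb{F}_q)$ is a set of $k$ points such that every line of $\mathbb{P}^2(\mathbb{F}_q)$ contains at most $n$ of its points and some line contains exactly $n$ of its points. *)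

(* Defs.v *)
From HB Require Import structures.
From mathcomp Require Import all_boot all_order all_algebra all_field.
From mathcomp Require Import mpoly.
Set Implicit Arguments. Unset Strict Implicit. Unset Printing Implicit Defensive.
Import GRing.Theory.
Local Open Scope ring_scope.

(* Points of P^2(F) are represented by normalized homogeneous coordinates:
   nonzero vectors of F^3 whose first nonzero coordinate is 1. Each point
   of P^2(F) has exactly one such representative. *)
Definition normalized (F : fieldType) (v : 'I_3 -> F) : bool :=
  [exists i : 'I_3, [&& v i == 1 & [forall j : 'I_3, (j < i)%N ==> (v j == 0)]]].

Definition P2 (F : finFieldType) : {set {ffun 'I_3 -> F}} :=
  [set v : {ffun 'I_3 -> F} | normalized v].

(* Lines of P^2(F): given by a normalized coefficient vector a,
   the line a_0 X_0 + a_1 X_1 + a_2 X_2 = 0. *)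
Definition on_line (F : fieldType) (a v : 'I_3 -> F) : bool :=
  \sum_(i < 3) a i * v i == 0.

Definition linform (F : fieldType) (a : 'I_3 -> F) : {mpoly F[3]} :=
  \sum_(i < 3) (a i)%:MP * 'X_i.

Definition mdivides (F : fieldType) (p q : {mpoly F[3]}) : Prop :=
  exists r : {mpoly F[3]}, q = p * r.

Definition no_Fq_linear_component (F : finFieldType) (P : {mpoly F[3]}) : Prop :=
  forall a : 'I_3 -> F, (exists i, a i != 0) -> ~ mdivides (linform a) P.

Definition rat_points (F : finFieldType) (P : {mpoly F[3]}) : {set {ffun 'I_3 -> F}} :=
  [set v in P2 F | P.@[v] == 0].

Definition is_arc (F : finFieldType) (S : {set {ffun 'I_3 -> F}}) (k n : nat) : Prop :=
  [/\ S \subset P2 F, #|S| = k,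
      (forall a : {ffun 'I_3 -> F}, a \in P2 F ->
          #|[set v in S | on_line a v]| <= n)%N &
      exists2 a : {ffun 'I_3 -> F}, a \in P2 F & #|[set v in S | on_line a v]| = n].

(* Main.v *)
Require Import Defs.
From HB Require Import structures.
From mathcomp Require Import all_boot all_order all_algebra all_field.
From mathcomp Require Import mpoly.
From mathcomp Require Import ring zify.
Set Implicit Arguments. Unset Strict Implicit. Unset Printing Implicit Defensive.
Import GRing.Theory.
Local Open Scope ring_scope.

Lemma mmap_ext n (R : ringType) (S : ringType) (f f' : R -> S) (h h' : 'I_n -> S) p :
  f =1 f' -> h =1 h' -> mmap f h p = mmap f' h' p.
Proof.
move=> ef eh; rewrite /mmap; apply: eq_bigr => m _; rewrite ef; congr (_ * _).
exact: mmap1_eq.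
Qed.

Lemma mmap_rmorph n (R : ringType) (S S' : comRingType) (psi : {rmorphism S -> S'})
  (f : R -> S) (h : 'I_n -> S) p :
  psi (mmap f h p) = mmap (fun x => psi (f x)) (fun i => psi (h i)) p.
Proof.
rewrite /mmap rmorph_sum; apply: eq_bigr => m _; rewrite rmorphM /mmap1 rmorph_prod.
by congr (_ * _); apply: eq_bigr => i _; rewrite rmorphXn.
Qed.

Lemma mmap_homog n (R : ringType) (S : comRingType) (f : R -> S) (h : 'I_n -> S)
  (x : S) d p : p \is d.-homog -> mmap f (fun i => x * h i) p = x ^+ d * mmap f h p.
Proof.
move=> /dhomogP hp; rewrite /mmap mulr_sumr big_seq [RHS]big_seq.
apply: eq_bigr => m /hp md; rewrite /mmap1.
under eq_bigr => i _ do rewrite exprMn.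
rewrite big_split /= prodrXr -mdegE md; ring.
Qed.

Lemma mmap_idX n (F : comRingType) (p : {mpoly F[n]}) :
  mmap (@mpolyC n F) (fun i => 'X_i) p = p.
Proof.
rewrite [RHS]mpolyE /mmap; apply: eq_bigr => m _.
by rewrite mmap1_id mul_mpolyC.
Qed.

Section Ideal.
Variables (n : nat) (F : comRingType) (L : {mpoly F[n]}).
Definition inI (x : {mpoly F[n]}) := exists r, x = L * r.
Lemma inI0 : inI 0. Proof. by exists 0; rewrite mulr0. Qed.
Lemma inID x y : inI x -> inI y -> inI (x + y).
Proof. by move=> [r ->] [s ->]; exists (r + s); rewrite mulrDr. Qed.
Lemma inIM x y : inI x -> inI (y * x).
Proof. by move=> [r ->]; exists (y * r); ring. Qed.
Lemma inI_prod (I : Type) (s : seq I) (G H : I -> {mpoly F[n]}) :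
  (forall i, inI (G i - H i)) -> inI (\prod_(i <- s) G i - \prod_(i <- s) H i).
Proof.
move=> gh; elim: s => [|a s IH]; first by rewrite !big_nil subrr; exact: inI0.
rewrite !big_cons.
have -> : G a * \prod_(j <- s) G j - H a * \prod_(j <- s) H j =
  (\prod_(j <- s) G j) * (G a - H a) + H a * (\prod_(j <- s) G j - \prod_(j <- s) H j) by ring.
by apply: inID; apply: inIM.
Qed.
Lemma inI_exp x y k : inI (x - y) -> inI (x ^+ k - y ^+ k).
Proof.
move=> h; elim: k => [|k IH]; first by rewrite !expr0 subrr; exact: inI0.
have -> : x ^+ k.+1 - y ^+ k.+1 = x ^+ k * (x - y) + y * (x ^+ k - y ^+ k).
  by rewrite !exprS; ring.
by apply: inID; apply: inIM.
Qed.
Lemma inI_mmap (s : 'I_n -> {mpoly F[n]}) p :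
  (forall i, inI ('X_i - s i)) -> inI (p - mmap (@mpolyC n F) s p).
Proof.
move=> hs; rewrite -{1}(mmap_idX p) /mmap -sumrB.
elim: (msupp p) => [|m r IH]; first by rewrite big_nil; exact: inI0.
rewrite big_cons; apply: inID => //; rewrite -mulrBr; apply: inIM.
rewrite /mmap1; apply: inI_prod => i; exact: inI_exp.
Qed.
End Ideal.
Section Pr.
Variable F : fieldType.
Definition Pr (p : {poly F}) n e := ((size p <= n.+1)%N /\ p`_n = e).

Lemma PrM p q n m e e' : Pr p n e -> Pr q m e' -> Pr (p * q) (n + m) (e * e').
Proof.
move=> [sp cp] [sq cq]; split.
  have := size_mul_leq p q; lia.
rewrite coefM (bigD1 (Ordinal (leq_addr m n : (n < (n+m).+1)%N))) //= addKn cp cq big1 ?addr0 //.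
move=> [j hj] /= /eqP/val_eqP /= hjn.
case: (ltngtP j n) hjn => // hjn _.
  by rewrite [q`__]nth_default ?mulr0 //; apply: leq_trans sq _; lia.
by rewrite [p`__]nth_default ?mul0r //; apply: leq_trans sp _; lia.
Qed.

Lemma PrD p q n e e' : Pr p n e -> Pr q n e' -> Pr (p + q) n (e + e').
Proof.
move=> [sp cp] [sq cq]; split; last by rewrite coefD cp cq.
by apply: leq_trans (size_add _ _) _; rewrite geq_max sp sq.
Qed.

Lemma Pr0 n : Pr 0 n 0.
Proof. by split; rewrite ?size_poly0 ?coef0. Qed.

Lemma Pr1 : Pr 1 0 1.
Proof. by split; rewrite ?size_poly1 ?coef1. Qed.

Lemma PrC c : Pr c%:P 0 c.
Proof. by split; rewrite ?size_polyC ?coefC //; case: (c != 0). Qed.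

Lemma PrX p k e : Pr p 1 e -> Pr (p ^+ k) k (e ^+ k).
Proof.
move=> h; elim: k => [|k IH]; first by rewrite !expr0; exact: Pr1.
by rewrite exprS [e ^+ _]exprS -add1n; apply: PrM.
Qed.

Lemma PrLin c b : Pr (c%:P * 'X + b%:P) 1 c.
Proof.
split; last by rewrite coefD coefCM coefX coefC /= mulr1 addr0.
apply: leq_trans (size_add _ _) _; rewrite geq_max.
apply/andP; split; last by rewrite size_polyC; case: (b != 0).
by apply: leq_trans (size_mul_leq _ _) _; rewrite size_polyX size_polyC; case: (c != 0).
Qed.

Lemma Pr_prod (I : Type) (s : seq I) (G : I -> {poly F}) (w : I -> nat) (e : I -> F) :
  (forall i, Pr (G i) (w i) (e i)) ->
  Pr (\prod_(i <- s) G i) (\sum_(i <- s) w i)%N (\prod_(i <- s) e i).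
Proof.
move=> h; elim: s => [|a s IH]; first by rewrite !big_nil; exact: Pr1.
by rewrite !big_cons; apply: PrM.
Qed.

Lemma Pr_sum (I : eqType) (s : seq I) (G : I -> {poly F}) n (e : I -> F) :
  (forall i, i \in s -> Pr (G i) n (e i)) ->
  Pr (\sum_(i <- s) G i) n (\sum_(i <- s) e i).
Proof.
elim: s => [|a s IH] h; first by rewrite !big_nil; exact: Pr0.
rewrite !big_cons; apply: PrD; first by apply: h; rewrite inE eqxx.
by apply: IH => i hi; apply: h; rewrite inE hi orbT.
Qed.

Lemma Pr_lower p n : Pr p n 0 -> (size p <= n)%N.
Proof.
move=> [sp cp]; case: (ltngtP (size p) n.+1) sp => // hs _.
have : p != 0 by rewrite -size_poly_eq0 hs.
by rewrite -lead_coef_eq0 lead_coefE hs /= cp eqxx.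
Qed.

End Pr.
Lemma P2_prop (F : finFieldType) (v w : {ffun 'I_3 -> F}) (x : F) :
  v \in P2 F -> w \in P2 F -> (forall l, w l = x * v l) -> w = v.
Proof.
rewrite !inE => /existsP [iv /andP [/eqP v1 /forallP v0]].
move=> /existsP [iw /andP [/eqP w1 /forallP w0]] h.
have x1 : x = 1.
  case: (ltngtP iv iw) => H.
  - have := w0 iv; rewrite H /= h v1 mulr1 => /eqP x0.
    by move: w1; rewrite h x0 mul0r => /eqP; rewrite eq_sym oner_eq0.
  - have := v0 iw; rewrite H /= => /eqP vw0.
    by move: w1; rewrite h vw0 mulr0 => /eqP; rewrite eq_sym oner_eq0.
  - have E : iv = iw by first [exact: H | apply: val_inj; exact: H].
    by rewrite -w1 h -E v1 mulr1.
by apply/ffunP => l; rewrite h x1 mul1r.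
Qed.

Lemma P2_nz (F : finFieldType) (v : {ffun 'I_3 -> F}) : v \in P2 F -> exists l, v l != 0.
Proof.
rewrite inE => /existsP [iv /andP [/eqP v1 _]]; exists iv; rewrite v1 oner_eq0 //.
Qed.

Definition trip (i j k : 'I_3) :=
  [/\ j != i, k != i, k != j & forall l : 'I_3, [|| l == i, l == j | l == k]].

Lemma trip_ex (i : 'I_3) : exists j k, trip i j k.
Proof.
case: i => [[|[|[|]]]] // Hi.
- by exists (Ordinal (isT : (1 < 3)%N)), (Ordinal (isT : (2 < 3)%N)); split => //; case => [[|[|[|]]]].
- by exists (Ordinal (isT : (0 < 3)%N)), (Ordinal (isT : (2 < 3)%N)); split => //; case => [[|[|[|]]]].
- by exists (Ordinal (isT : (0 < 3)%N)), (Ordinal (isT : (1 < 3)%N)); split => //; case => [[|[|[|]]]].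
Qed.

Lemma sum3 (R : zmodType) i j k (G : 'I_3 -> R) : trip i j k ->
  \sum_l G l = G i + G j + G k.
Proof.
case=> ji ki kj cov.
rewrite (bigD1 i) //= (bigD1 j) //= (bigD1 k) /=; last by rewrite kj ki.
rewrite big1 ?addr0 ?addrA // => l /andP [/andP [li lj] lk].
by move: (cov l); rewrite (negbTE li) (negbTE lj) (negbTE lk).
Qed.

Section Line.
Variables (F : finFieldType) (a : 'I_3 -> F) (i j k : 'I_3).
Hypotheses (hT : trip i j k) (ha : a i = 1).

Definition cvec (l : 'I_3) : F := if l == i then - a j else if l == j then 1 else 0.
Definition bvec (l : 'I_3) : F := if l == i then - a k else if l == k then 1 else 0.

Lemma on_lineE (v : 'I_3 -> F) : on_line a v -> v i = - (a j * v j + a k * v k).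
Proof.
rewrite /on_line (sum3 _ hT) ha mul1r => /eqP H.
by apply/eqP; rewrite -subr_eq0 opprK -H; apply/eqP; ring.
Qed.

Lemma pointE (v : 'I_3 -> F) : on_line a v -> forall l, v l = v j * cvec l + v k * bvec l.
Proof.
case: hT => ji ki kj cov.
move=> /on_lineE vi l; rewrite /cvec /bvec.
case/or3P: (cov l) => /eqP ->; rewrite ?eqxx ?(negbTE ji) ?(negbTE ki) ?(negbTE kj) ?vi.
- ring.
- rewrite eq_sym (negbTE kj); ring.
- ring.
Qed.

Lemma line_inj (v w : {ffun 'I_3 -> F}) : v \in P2 F -> w \in P2 F ->
  on_line a v -> on_line a w -> v k != 0 -> w k != 0 -> v j / v k = w j / w k -> w = v.
Proof.
move=> vP wP va wa vk wk e.
apply: (P2_prop (x := w k / v k)) => // l.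
rewrite (pointE va l) (pointE wa l).
have -> : w j = v j / v k * w k by rewrite e mulfVK.
by field.
Qed.

Lemma line_inf (v w : {ffun 'I_3 -> F}) : v \in P2 F -> w \in P2 F ->
  on_line a v -> on_line a w -> v k = 0 -> w k = 0 -> w = v.
Proof.
move=> vP wP va wa vk wk.
have vj : v j != 0.
  apply/negP => /eqP vj; have [l] := P2_nz vP.
  by rewrite (pointE va) vj vk !mul0r addr0 eqxx.
apply: (P2_prop (x := w j / v j)) => // l.
rewrite (pointE va l) (pointE wa l) vk wk !mul0r !addr0; by field.
Qed.

Lemma line_card : (#|[set v in P2 F | on_line a v]| <= #|F|.+1)%N.
Proof.
pose f (v : {ffun 'I_3 -> F}) : option F := if v k == 0 then None else Some (v j / v k).
rewrite -(card_in_imset (f := f)); last first.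
  move=> v w /setIdP [vP va] /setIdP [wP wa]; rewrite /f.
  case: (eqVneq (v k) 0) => vk; case: (eqVneq (w k) 0) => wk //.
  - by move=> _; apply/esym/line_inf.
  - by move=> [] e; apply/esym/line_inj.
by rewrite -card_option max_card.
Qed.

End Line.
Section KL.
Variables (F : finFieldType) (P : {mpoly F[3]}) (a : 'I_3 -> F) (i j k : 'I_3).
Hypotheses (hT : trip i j k) (ha : a i = 1) (hP : P \is (#|F|.-1).-homog).
Let d := #|F|.-1.
Let c := cvec a i j.
Let b := bvec a i k.
Let h (l : 'I_3) : {poly F} := (c l)%:P * 'X + (b l)%:P.
Let g := mmap (@polyC F) h P.

Lemma meval_homog (x : F) (v : 'I_3 -> F) : P.@[fun l => x * v l] = x ^+ d * P.@[v].
Proof. exact: mmap_homog. Qed.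

Lemma gE t : g.[t] = P.@[fun l => t * c l + b l].
Proof.
have := mmap_rmorph (horner_eval t) (@polyC F) h P.
rewrite /= horner_evalE => ->; apply: mmap_ext => [x|l] /=.
  by rewrite horner_evalE hornerC.
by rewrite horner_evalE /h hornerD hornerMX !hornerC mulrC.
Qed.

Lemma gPr : Pr g d P.@[c].
Proof.
rewrite /g /mmap mevalE; apply: Pr_sum => m /(dhomogP _ _ _ hP) md.
have md' : (\sum_l m l = d)%N by rewrite -mdegE; exact: md.
rewrite -[d]add0n; apply: PrM; first exact: PrC.
rewrite -md'; apply: Pr_prod => l; apply: PrX; exact: PrLin.
Qed.

Lemma inR (v : {ffun 'I_3 -> F}) : v \in [set v in rat_points P | on_line a v] ->
  [/\ v \in P2 F, P.@[v] = 0 & on_line a v].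
Proof. by move=> /setIdP [/setIdP [vP /eqP v0] va]. Qed.

Lemma g0 : (d < #|[set v in rat_points P | on_line a v]|)%N -> g = 0.
Proof.
set R := [set v in rat_points P | on_line a v] => hR.
set B := [set v : {ffun 'I_3 -> F} | v k != 0].
set rs := [seq (v : {ffun _ -> _}) j / v k | v <- enum (R :&: B)].
have rootR : all (root g) rs.
  apply/allP => x /mapP [v]; rewrite mem_enum => /setIP [/inR [vP v0 va]].
  rewrite inE => vk ->.
  have E : (fun l => v j / v k * c l + b l) =1 (fun l => (v k)^-1 * v l).
    by move=> l /=; rewrite (pointE hT ha va l) mulrDr mulrA [(v k)^-1 * _]mulrC mulKf.
  by rewrite /root gE (meval_eq P E) meval_homog v0 mulr0.
have urs : uniq rs.
  rewrite map_inj_in_uniq ?enum_uniq // => v w; rewrite !mem_enum.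
  move=> /setIP [/inR [vP _ va]]; rewrite inE => vk.
  move=> /setIP [/inR [wP _ wa]]; rewrite inE => wk e.
  by apply/esym/(line_inj hT ha).
have srs : size rs = #|R :&: B| by rewrite size_map -cardE.
have [sg cg] := gPr.
apply: (roots_geq_poly_eq0 rootR urs); rewrite srs.
case: (eqVneq (P.@[c]) 0) => Pc.
- have sg' : (size g <= d)%N by apply: Pr_lower; split; rewrite // cg.
  have h1 : (#|R :\: B| <= 1)%N.
    apply/card_le1_eqP => v w.
    move=> /setDP [/inR [vP _ va] vk] /setDP [/inR [wP _ wa] wk].
    move: vk wk; rewrite !inE !negbK => /eqP vk /eqP wk.
    by apply/esym/(line_inf hT ha).
  rewrite -(cardsID B R) in hR; apply: leq_trans sg' _; move: hR h1; set x := #|R :&: B|; set y := #|R :\: B|; rewrite /d; lia.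
- have RB : R \subset B.
    apply/subsetP => v /inR [vP v0 va]; rewrite inE; apply/negP => /eqP vk.
    have E : (fun l => v l) =1 (fun l => v j * c l).
      by move=> l /=; rewrite (pointE hT ha va l) vk mul0r addr0.
    move: v0; rewrite (meval_eq P E) meval_homog => /eqP.
    rewrite mulf_eq0 (negbTE Pc) orbF expf_eq0 => /andP [_ /eqP vj].
    have [l] := P2_nz vP; by rewrite (pointE hT ha va l) vj vk !mul0r addr0 eqxx.
  have -> : R :&: B = R by apply/setIidPl.
  by apply: leq_trans sg _.
Qed.

Let sig (l : 'I_3) : {mpoly F[3]} := (c l)%:MP * 'X_j + (b l)%:MP * 'X_k.

Lemma Q0 : g = 0 -> mmap (@mpolyC 3 F) sig P = 0.
Proof.
move=> g0.
pose xk : {fraction {mpoly F[3]}} := tofrac 'X_k.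
pose u := tofrac 'X_j / xk.
pose rho := (horner_eval u \o map_poly (@tofrac _ \o @mpolyC 3 F)).
have xk0 : xk != 0.
  rewrite tofrac_eq0; apply/negP => /eqP e.
  have := mevalXU (fun=> (1 : F)) k; rewrite e meval0 => /eqP; by rewrite eq_sym oner_eq0.
have E1 : forall x, rho x%:P = tofrac x%:MP.
  by move=> x; rewrite /rho /= horner_evalE map_polyC hornerC.
have E2 : forall l, rho (h l) = xk^-1 * tofrac (sig l).
  move=> l; rewrite /rho /= horner_evalE /h rmorphD rmorphM /= !map_polyC map_polyX.
  rewrite hornerD hornerCM hornerX hornerC /sig rmorphD !rmorphM /= /u -/xk mulrDr.
  congr (_ + _); first by rewrite mulrA mulrC.
  by rewrite [RHS]mulrC mulfK.
have := mmap_rmorph rho (@polyC F) h P.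
rewrite -/g g0 rmorph0.
erewrite mmap_ext; [|exact: E1|exact: E2].
rewrite (mmap_homog _ _ _ hP) -(mmap_rmorph (@tofrac _) (@mpolyC 3 F) sig P).
move=> /esym /eqP; rewrite mulf_eq0 expf_eq0 invr_eq0 (negbTE xk0) andbF /=.
by rewrite tofrac_eq0 => /eqP.
Qed.

Lemma KLdiv : (d < #|[set v in rat_points P | on_line a v]|)%N -> mdivides (linform a) P.
Proof.
move=> hR; have Q := Q0 (g0 hR).
have [r hr] : inI (linform a) (P - mmap (@mpolyC 3 F) sig P).
  apply: inI_mmap => l.
  case: (hT) => ji ki kj cov.
  rewrite /sig /c /b /cvec /bvec.
  case/or3P: (cov l) => /eqP ->; rewrite ?eqxx ?(negbTE ji) ?(negbTE ki) ?(negbTE kj).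
  - exists 1; rewrite mulr1 /linform (sum3 _ hT) ha !rmorphN rmorph1; ring.
  - rewrite eq_sym (negbTE kj).
    exists 0; rewrite mulr0 rmorph1 rmorph0; ring.
  - exists 0; rewrite mulr0 rmorph1 rmorph0; ring.
by exists r; move: hr; rewrite Q subr0.
Qed.

End KL.
Definition o0 : 'I_3 := Ordinal (isT : (0 < 3)%N).
Definition o1 : 'I_3 := Ordinal (isT : (1 < 3)%N).
Definition o2 : 'I_3 := Ordinal (isT : (2 < 3)%N).

Lemma trip012 : trip o0 o1 o2.
Proof. by split => //; case => [[|[|[|]]]]. Qed.

Lemma cov3 (x : 'I_3) : [\/ x = o0, x = o1 | x = o2].
Proof.
case: trip012 => _ _ _ /(_ x) /or3P [] /eqP ->; [exact: Or31 | exact: Or32 | exact: Or33].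
Qed.

Section Cross.
Variable F : finFieldType.
Implicit Types (p v w : 'I_3 -> F).

Definition cross p v : 'I_3 -> F := fun l =>
  [:: p o1 * v o2 - p o2 * v o1; p o2 * v o0 - p o0 * v o2; p o0 * v o1 - p o1 * v o0]`_l.

Lemma sum3' (G : 'I_3 -> F) : \sum_l G l = G o0 + G o1 + G o2.
Proof. exact: (sum3 _ trip012). Qed.

Lemma cross_on1 p v : on_line (cross p v) p.
Proof. by rewrite /on_line sum3' /cross /=; apply/eqP; ring. Qed.

Lemma cross_on2 p v : on_line (cross p v) v.
Proof. by rewrite /on_line sum3' /cross /=; apply/eqP; ring. Qed.

Lemma on_lineC p v : on_line p v = on_line v p.
Proof. by rewrite /on_line; congr (_ == 0); apply: eq_bigr => l _; rewrite mulrC. Qed.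

Lemma cross_key p v : (forall l, cross p v l = 0) ->
  forall x y, p x * v y - v x * p y = 0.
Proof.
move=> h x y.
have h0 := h o0; have h1 := h o1; have h2 := h o2.
case: (cov3 x) => ->; case: (cov3 y) => ->; try by rewrite mulrC subrr.
- have E : p o0 * v o1 - v o0 * p o1 = cross p v o2 by rewrite /cross /=; ring.
  by rewrite E h2.
- have E : p o0 * v o2 - v o0 * p o2 = - cross p v o1 by rewrite /cross /=; ring.
  by rewrite E h1 oppr0.
- have E : p o1 * v o0 - v o1 * p o0 = - cross p v o2 by rewrite /cross /=; ring.
  by rewrite E h2 oppr0.
- have E : p o1 * v o2 - v o1 * p o2 = cross p v o0 by rewrite /cross /=; ring.
  by rewrite E h0.
- have E : p o2 * v o0 - v o2 * p o0 = cross p v o1 by rewrite /cross /=; ring.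
  by rewrite E h1.
- have E : p o2 * v o1 - v o2 * p o1 = - cross p v o0 by rewrite /cross /=; ring.
  by rewrite E h0 oppr0.
Qed.

Lemma cross_nz (p v : {ffun 'I_3 -> F}) : p \in P2 F -> v \in P2 F -> v != p ->
  exists l, cross p v l != 0.
Proof.
move=> pP vP vp.
case: (boolP [forall l, cross p v l == 0]) => [/forallP H|]; last first.
  by rewrite negb_forall => /existsP [l hl]; exists l.
have key := cross_key (fun l => eqP (H l)).
move: (pP); rewrite inE => /existsP [ip /andP [/eqP p1 _]].
suff : v = p by move/eqP; rewrite (negbTE vp).
apply: (P2_prop (x := v ip)) => // l.
have := key ip l; rewrite p1 mul1r => /eqP; rewrite subr_eq0 => /eqP ->.
by rewrite mulrC.
Qed.

Definition piv w : 'I_3 := if w o0 != 0 then o0 else if w o1 != 0 then o1 else o2.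

Definition nrm w : {ffun 'I_3 -> F} := [ffun l => (w (piv w))^-1 * w l].

Lemma nrm_P2 w : (exists l, w l != 0) -> nrm w \in P2 F.
Proof.
move=> [l wl]; rewrite inE; apply/existsP; exists (piv w).
rewrite /nrm /piv.
case: (eqVneq (w o0) 0) => w0 /=.
  case: (eqVneq (w o1) 0) => w1 /=.
    have w2 : w o2 != 0.
      by move: wl; case: (cov3 l) => ->; rewrite ?w0 ?w1 ?eqxx.
    rewrite ffunE mulVf // eqxx /=; apply/forallP => x; rewrite ffunE.
    by case: (cov3 x) => -> //=; rewrite ?w0 ?w1 mulr0.
  rewrite ffunE mulVf // eqxx /=; apply/forallP => x; rewrite ffunE.
  by case: (cov3 x) => -> //=; rewrite ?w0 mulr0.
by rewrite ffunE mulVf // eqxx /=; apply/forallP.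
Qed.

Lemma nrm_on w x : on_line w x -> on_line (nrm w) x.
Proof.
rewrite /on_line => /eqP H.
under eq_bigr => l _ do rewrite ffunE -mulrA.
by rewrite -mulr_sumr H mulr0.
Qed.

End Cross.

Lemma card_bigcup_le (T I : finType) (A : {set I}) (B : I -> {set T}) :
  (#|\bigcup_(a in A) B a| <= \sum_(a in A) #|B a|)%N.
Proof.
elim/big_rec2: _ => [|a n U _ IH]; first by rewrite cards0.
apply: leq_trans (leq_card_setU _ _) _.
by rewrite leq_add2l.
Qed.

Theorem lemma3p2 (F : finFieldType) (P : {mpoly F[3]}) :
  (5 <= #|F|)%N ->
  P != 0 -> P \is (#|F|.-1).-homog ->
  no_Fq_linear_component P ->
  #|rat_points P| = (#|F|.-1 ^ 2)%N ->
  is_arc (rat_points P) (#|F|.-1 ^ 2) (#|F|.-1).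
Proof.
move=> q5 _ hP nolin hcard.
set S := rat_points P.
have ub : forall a : {ffun 'I_3 -> F}, a \in P2 F ->
    (#|[set v in S | on_line a v]| <= #|F|.-1)%N.
  move=> a; rewrite inE => /existsP [i /andP [/eqP ai _]].
  have [j [k hT]] := trip_ex i.
  rewrite leqNgt; apply/negP => H.
  apply: (nolin a); first by exists i; rewrite ai oner_eq0.
  exact: (KLdiv hT ai hP H).
split => //.
  by apply/subsetP => v /setIdP [].
case: (boolP [exists a in P2 F, #|[set v in S | on_line a v]| == #|F|.-1]).
  by move=> /existsP [a /andP [aP /eqP E]]; exists a.
rewrite negb_exists => /forallP H.
exfalso.
set q := #|F| in q5 hcard ub H.
have ub' : forall a : {ffun 'I_3 -> F}, a \in P2 F ->
    (#|[set v in S | on_line a v]| <= q - 2)%N.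
  move=> a aP; have := ub a aP; have := H a; rewrite aP /= => /eqP; lia.
have : (0 < #|S|)%N by rewrite hcard expn_gt0; apply/orP; left; lia.
case/card_gt0P => p pS.
have pP : p \in P2 F by move: pS => /setIdP [].
set A := [set a in P2 F | on_line a p].
have cA : (#|A| <= q.+1)%N.
  move: (pP); rewrite inE => /existsP [ip /andP [/eqP p1 _]].
  have [j [k hT]] := trip_ex ip.
  have -> : A = [set v in P2 F | on_line p v].
    by apply/setP => v; rewrite !inE on_lineC.
  exact: (line_card hT p1).
have cover : S :\ p \subset \bigcup_(a in A) ([set v in S | on_line a v] :\ p).
  apply/subsetP => v /setD1P [vp vS].
  have vP : v \in P2 F by move: vS => /setIdP [].
  have nz := cross_nz pP vP vp.
  apply/bigcupP; exists (nrm (cross p v)).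
    by apply/setIdP; split; [exact: nrm_P2 | apply: nrm_on; exact: cross_on1].
  apply/setD1P; split => //; apply/setIdP; split => //.
  apply: nrm_on; exact: cross_on2.
have h1 := subset_leq_card cover.
have h2 := card_bigcup_le A (fun a => [set v in S | on_line a v] :\ p).
have h3 : (\sum_(a in A) #|[set v in S | on_line a v] :\ p| <= \sum_(a in A) (q - 3))%N.
  apply: leq_sum => a /setIdP [aP ap].
  set X := [set v in S | on_line a v].
  have pX : p \in X by apply/setIdP.
  have e := cardsD1 p X; rewrite pX add1n in e.
  have u := ub' a aP; rewrite -/X in u.
  move: e u; set y := #|X :\ p|; set z := #|X|; lia.
rewrite sum_nat_const in h3.
have := cardsD1 p S; rewrite pS hcard.
move: h1 h2 h3 cA q5; set x := #|S :\ p|; set y := #|\bigcup_(a in A) _|.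
set z := (\sum_(a in A) _)%N; set w := #|A|.
move=> h1 h2 h3 cA q5 h4.
have : (x <= w * (q - 3))%N by lia.
have : (w * (q - 3) <= q.+1 * (q - 3))%N by rewrite leq_mul2r cA orbT.
move: h4; rewrite -subn1 => h4; nia.
Qed.
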